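(* Let $\mathcal P$ and $\mathcal U$ be a Preisach operator and its potential operator satisfying the assumptions in the context, so that $q\frac{d}{dt}\mathcal P[q]-\frac{d}{dt}\mathcal U[q]\ge0$ a.e. for all $q\in W^{1,1}(0,T)$. Let $c>0$, $\kappa>0$, $e\in\mathbb R$ be constants and $f\in C^1(\mathbb R)$ with $f>0$ and $f'$ bounded on bounded sets. For $\varepsilon,E\in W^{1,1}(0,T)$ set $q=E/f(\varepsilon)$ and $$\sigma=c\varepsilon-eE+f'(\varepsilon)\,\mathcal U[q],\qquad D=e\varepsilon+\kappa E+\mathcal P[q],\qquad F=\tfrac c2\varepsilon^2+\tfrac\kappa2E^2+f(\varepsilon)\,\mathcal U[q].$$ Then $$\dot\varepsilon\,\sigma+\dot D\,E-\dot F\ge0\quad\text{a.e. in }(0,T).$$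
   Context: Play operator: for $r>0$ and $q\in W^{1,1}(0,T)$, $\xi_r=\xi_r[q]$ solves $|q-\xi_r|\le r$, $\dot\xi_r(q-\xi_r-rz)\ge0$ a.e. for all $|z|\le1$, $\xi_r(0)=\max\{q(0)-r,\min\{0,q(0)+r\}\}$. Preisach operator $\mathcal P[q](t)=\int_0^\infty g(r,\xi_r[q](t))\,dr$ with $g(r,0)=0$, $0\le\partial_vg(r,v)\le\mu(r)$, $\mu\in L^1(0,\infty)$, $|v|\partial_vg(r,v)\le\mu_1(r)$ with $\mu_1\in L^1(0,\infty)$; potential $\mathcal U[q](t)=\int_0^\infty G(r,\xi_r[q](t))\,dr$, $G(r,v)=\int_0^v v'\partial_vg(r,v')\,dv'$. *)

(* Defs.v *)
From Stdlib Require Import Reals Lra List.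
Import ListNotations.
Open Scope R_scope.

(** * Henstock–Kurzweil (gauge) integral on a compact interval [a,b].
    A tagged partition of [lo,b] is a list of (tag, right endpoint) pairs. *)
Fixpoint fine_tagged_partition (delta : R -> R) (lo b : R) (P : list (R * R)) : Prop :=
  match P with
  | [] => lo = b
  | (t, c) :: P' =>
      lo < c /\ lo <= t <= c /\ t - delta t < lo /\ c < t + delta t /\
      fine_tagged_partition delta c b P'
  end.

Fixpoint riemann_sum (f : R -> R) (lo : R) (P : list (R * R)) : R :=
  match P with
  | [] => 0
  | (t, c) :: P' => f t * (c - lo) + riemann_sum f c P'
  end.

Definition HK_integral (f : R -> R) (a b I : R) : Prop :=
  a <= b /\
  forall eps, 0 < eps ->
    exists delta : R -> R, (forall x, 0 < delta x) /\
      forall P, fine_tagged_partition delta a b P ->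
        Rabs (riemann_sum f a P - I) < eps.

Definition HK_oriented (f : R -> R) (a b I : R) : Prop :=
  (a <= b /\ HK_integral f a b I) \/ (b < a /\ HK_integral f b a (- I)).

(** Improper integral \int_0^\infty h(r) dr = I (Hake: HK on [0,oo)). *)
Definition improper_integral_0_inf (h : R -> R) (I : R) : Prop :=
  (forall Rr, 0 < Rr -> exists J, HK_integral h 0 Rr J) /\
  forall eps, 0 < eps -> exists M, forall Rr J,
      M < Rr -> HK_integral h 0 Rr J -> Rabs (J - I) < eps.

Definition improper_integrable_0_inf (h : R -> R) : Prop :=
  exists I, improper_integral_0_inf h I.

(** L^1(0,oo): h and |h| both (HK-)integrable, i.e. Lebesgue integrable. *)
Definition L1_0_inf (h : R -> R) : Prop :=
  improper_integrable_0_inf h /\ improper_integrable_0_inf (fun r => Rabs (h r)).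

Definition null_set (N : R -> Prop) : Prop :=
  forall eps, 0 < eps ->
    exists a b : nat -> R,
      (forall n, a n <= b n) /\
      (forall x, N x -> exists n, a n < x < b n) /\
      (forall n, sum_f_R0 (fun k => b k - a k) n < eps).

Definition ae_on (T : R) (P : R -> Prop) : Prop :=
  exists N, null_set N /\ forall t, 0 < t < T -> ~ N t -> P t.

(** * W^{1,1}(0,T) = absolutely continuous functions on [0,T]. *)
Fixpoint nonoverlapping (lo hi : R) (l : list (R * R)) : Prop :=
  match l with
  | [] => lo <= hi
  | (a, b) :: l' => lo <= a /\ a <= b /\ nonoverlapping b hi l'
  end.

Fixpoint total_length (l : list (R * R)) : R :=
  match l with [] => 0 | (a, b) :: l' => (b - a) + total_length l' end.

Fixpoint total_variation_on (u : R -> R) (l : list (R * R)) : R :=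
  match l with [] => 0 | (a, b) :: l' => Rabs (u b - u a) + total_variation_on u l' end.

Definition W11 (T : R) (u : R -> R) : Prop :=
  forall eps, 0 < eps -> exists delta, 0 < delta /\
    forall l, nonoverlapping 0 T l -> total_length l < delta ->
      total_variation_on u l < eps.

Definition is_play (T r : R) (q xi : R -> R) : Prop :=
  W11 T xi /\
  (forall t, 0 <= t <= T -> Rabs (q t - xi t) <= r) /\
  ae_on T (fun t => forall dxi, derivable_pt_lim xi t dxi ->
             forall z, Rabs z <= 1 -> dxi * (q t - xi t - r * z) >= 0) /\
  xi 0 = Rmax (q 0 - r) (Rmin 0 (q 0 + r)).

Definition preisach_at (h : R -> R -> R) (T : R) (q : R -> R) (t p : R) : Prop :=
  exists xi : R -> R -> R,
    (forall r, 0 < r -> is_play T r q (xi r)) /\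
    improper_integral_0_inf (fun r => h r (xi r t)) p.

(* Main.v *)
Require Import Defs.
From Stdlib Require Import Reals Lra Lia List ZArith Arith.Cantor ClassicalEpsilon Classical.
Import ListNotations.
Open Scope R_scope.

Definition lsum {A} (g : A -> R) (l : list A) : R :=
  fold_right (fun x acc => g x + acc) 0 l.

Lemma lsum_app {A} (g : A -> R) l1 l2 : lsum g (l1 ++ l2) = lsum g l1 + lsum g l2.
Proof. induction l1; simpl; [lra| rewrite IHl1; lra]. Qed.

Lemma lsum_ge0 {A} (g : A -> R) l : (forall x, 0 <= g x) -> 0 <= lsum g l.
Proof. intros H; induction l; simpl; [lra| specialize (H a); lra]. Qed.

Lemma lsum_sub {A} (g : A -> R) (L S : list A) :
  (forall x, 0 <= g x) -> NoDup L -> incl L S -> lsum g L <= lsum g S.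
Proof.
  intros Hg HL; revert S; induction HL as [|x L' Hx HL' IH]; intros S Hin.
  - simpl; apply lsum_ge0; auto.
  - assert (HxS : In x S) by (apply Hin; left; auto).
    destruct (in_split _ _ HxS) as [S1 [S2 ->]].
    assert (incl L' (S1 ++ S2)).
    { intros y Hy. assert (Hy' : In y (S1 ++ x :: S2)) by (apply Hin; right; auto).
      apply in_app_or in Hy'. apply in_or_app. destruct Hy' as [H|H]; [left; auto|].
      destruct H as [H|H]; [subst; contradiction| right; auto]. }
    specialize (IH _ H). rewrite lsum_app in IH. rewrite lsum_app; simpl. lra.
Qed.

Lemma lsum_seq (g : nat -> R) n : lsum g (seq 0 (S n)) = sum_f_R0 g n.
Proof.
  induction n. simpl; lra.
  rewrite seq_S, lsum_app, IHn. simpl. replace (0 + S n)%nat with (S n) by lia. lra.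
Qed.

Lemma lsum_map {A B} (g : B -> R) (f : A -> B) l : lsum g (map f l) = lsum (fun x => g (f x)) l.
Proof. induction l; simpl; auto. rewrite IHl; auto. Qed.

Lemma lsum_flat_map {A B} (g : B -> R) (f : A -> list B) l :
  lsum g (flat_map f l) = lsum (fun x => lsum g (f x)) l.
Proof. induction l; simpl; auto. rewrite lsum_app, IHl; auto. Qed.

Lemma lsum_prod {A B} (g : A * B -> R) l l' :
  lsum g (list_prod l l') = lsum (fun x => lsum g (map (fun y => (x, y)) l')) l.
Proof. induction l; simpl; auto. rewrite lsum_app, IHl; auto. Qed.

Lemma sum_f_R0_le (u v : nat -> R) n : (forall k, (k <= n)%nat -> u k <= v k) ->
  sum_f_R0 u n <= sum_f_R0 v n.
Proof.
  induction n; intros H; simpl. apply H; lia.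
  assert (sum_f_R0 u n <= sum_f_R0 v n) by (apply IHn; intros; apply H; lia).
  specialize (H (S n) (Nat.le_refl _)). lra.
Qed.

Lemma sum_f_R0_ge0 (u : nat -> R) n : (forall k, 0 <= u k) -> 0 <= sum_f_R0 u n.
Proof. intros H; induction n; simpl; [apply H| specialize (H (S n)); lra]. Qed.

Lemma sum_f_R0_mono (u : nat -> R) n m : (forall k, 0 <= u k) -> (n <= m)%nat ->
  sum_f_R0 u n <= sum_f_R0 u m.
Proof.
  intros H Hnm; induction Hnm; [lra|]. simpl. specialize (H (S m)). lra.
Qed.

Lemma double_sum_bound (c : nat -> nat -> R) (d : nat -> R) (D : R) :
  (forall k j, 0 <= c k j) ->
  (forall k J, sum_f_R0 (c k) J <= d k) ->
  (forall K, sum_f_R0 d K <= D) ->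
  forall N, sum_f_R0 (fun n => c (fst (of_nat n)) (snd (of_nat n))) N <= D.
Proof.
  intros Hc Hd HD N.
  set (g := fun p : nat * nat => c (fst p) (snd p)).
  assert (Hg : forall p, 0 <= g p) by (intros [k j]; apply Hc).
  rewrite <- lsum_seq.
  rewrite <- (lsum_map g of_nat).
  set (L := map of_nat (seq 0 (S N))).
  set (Box := list_prod (seq 0 (S N)) (seq 0 (S N))).
  apply Rle_trans with (lsum g Box).
  - apply lsum_sub; auto.
    + apply NoDup_map_NoDup_ForallPairs; [|apply seq_NoDup].
      intros x y _ _ Hxy. rewrite <- (cancel_to_of x), <- (cancel_to_of y), Hxy; auto.
    + intros [k j] Hin. unfold L in Hin. apply in_map_iff in Hin.
      destruct Hin as [n [Hn Hin]]. apply in_seq in Hin.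
      pose proof (to_nat_non_decreasing k j) as Hnd.
      rewrite <- Hn, cancel_to_of in Hnd.
      apply in_prod; apply in_seq; lia.
  - unfold Box. rewrite lsum_prod.
    rewrite lsum_seq.
    apply Rle_trans with (sum_f_R0 d N); [|apply HD].
    apply sum_f_R0_le. intros k _.
    rewrite lsum_map. unfold g. cbn beta. rewrite (lsum_seq (fun j => c k j)). apply Hd.
Qed.

Definition cov (E : R -> Prop) (S : R) : Prop :=
  exists a b : nat -> R, (forall n, a n <= b n) /\
    (forall x, E x -> exists n, a n < x < b n) /\
    (forall n, sum_f_R0 (fun k => b k - a k) n <= S).

Lemma cov_mono (E1 E2 : R -> Prop) S1 S2 : (forall x, E2 x -> E1 x) -> S1 <= S2 ->
  cov E1 S1 -> cov E2 S2.
Proof.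
  intros HE HS [a [b [H1 [H2 H3]]]]. exists a, b; repeat split; auto.
  intros n; specialize (H3 n); lra.
Qed.

Lemma cov_empty (E : R -> Prop) : (forall x, ~ E x) -> cov E 0.
Proof.
  intros H. exists (fun _ => 0), (fun _ => 0). split; [|split].
  - intros; lra.
  - intros x Hx; exfalso; eapply H; eauto.
  - intros n; induction n; simpl; lra.
Qed.

Lemma cov_interval (E : R -> Prop) lo hi : lo <= hi -> (forall x, E x -> lo < x < hi) ->
  cov E (hi - lo).
Proof.
  intros Hle H. exists (fun n => match n with O => lo | _ => 0 end),
    (fun n => match n with O => hi | _ => 0 end). repeat split.
  - intros [|n]; lra.
  - intros x Hx; exists O; apply H; auto.
  - intros n; induction n; simpl; [lra|]. lra.
Qed.

Lemma cov_union (E : nat -> R -> Prop) (S : nat -> R) (D : R) :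
  (forall k, cov (E k) (S k)) -> (forall K, sum_f_R0 S K <= D) ->
  cov (fun x => exists k, E k x) D.
Proof.
  intros HE HD.
  assert (X : forall k, {ab : (nat -> R) * (nat -> R) |
      (forall n, fst ab n <= snd ab n) /\
      (forall x, E k x -> exists n, fst ab n < x < snd ab n) /\
      (forall n, sum_f_R0 (fun j => snd ab j - fst ab j) n <= S k)}).
  { intros k. apply constructive_indefinite_description.
    destruct (HE k) as [a [b H]]. exists (a, b); exact H. }
  set (A := fun k => fst (proj1_sig (X k))).
  set (B := fun k => snd (proj1_sig (X k))).
  assert (HA : forall k n, A k n <= B k n) by (intros k; exact (proj1 (proj2_sig (X k)))).
  assert (HC : forall k x, E k x -> exists n, A k n < x < B k n)
    by (intros k; exact (proj1 (proj2 (proj2_sig (X k))))).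
  assert (HS : forall k n, sum_f_R0 (fun j => B k j - A k j) n <= S k)
    by (intros k; exact (proj2 (proj2 (proj2_sig (X k))))).
  exists (fun n => A (fst (of_nat n)) (snd (of_nat n))),
         (fun n => B (fst (of_nat n)) (snd (of_nat n))).
  repeat split.
  - intros n; apply HA.
  - intros x [k Hk]. destruct (HC k x Hk) as [n Hn].
    exists (to_nat (k, n)). rewrite cancel_of_to. simpl. auto.
  - intros N.
    apply (double_sum_bound (fun k j => B k j - A k j) S D); auto.
    intros k j; specialize (HA k j); lra.
Qed.

Lemma cov_null (N : R -> Prop) : (forall eps, 0 < eps -> cov N eps) -> null_set N.
Proof.
  intros H eps Heps. destruct (H (eps/2)) as [a [b [H1 [H2 H3]]]]; [lra|].
  exists a, b; repeat split; auto. intros n; specialize (H3 n); lra.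
Qed.

Lemma null_cov (N : R -> Prop) eps : null_set N -> 0 < eps -> cov N eps.
Proof.
  intros H Heps. destruct (H eps Heps) as [a [b [H1 [H2 H3]]]].
  exists a, b; repeat split; auto. intros n; specialize (H3 n); lra.
Qed.

Lemma geom_sum eps K : sum_f_R0 (fun k => eps / 2 ^ (S k)) K = eps - eps / 2 ^ (S K).
Proof.
  induction K. simpl. field.
  rewrite tech5, IHK. simpl. field. apply pow_nonzero; lra.
Qed.

Lemma null_union (N : nat -> R -> Prop) : (forall k, null_set (N k)) ->
  null_set (fun x => exists k, N k x).
Proof.
  intros H. apply cov_null. intros eps Heps.
  apply cov_union with (S := fun k => eps / 2 ^ (S k)).
  - intros k. apply null_cov; auto. apply Rdiv_lt_0_compat; auto. apply pow_lt; lra.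
  - intros K. rewrite geom_sum. assert (0 < eps / 2 ^ (S K)).
    apply Rdiv_lt_0_compat; auto. apply pow_lt; lra. lra.
Qed.

Lemma null_subset (N1 N2 : R -> Prop) : (forall x, N2 x -> N1 x) -> null_set N1 -> null_set N2.
Proof.
  intros H HN eps Heps. destruct (HN eps Heps) as [a [b [H1 [H2 H3]]]].
  exists a, b; repeat split; auto.
Qed.

Lemma null_union2 (N1 N2 : R -> Prop) : null_set N1 -> null_set N2 ->
  null_set (fun x => N1 x \/ N2 x).
Proof.
  intros H1 H2.
  apply null_subset with (fun x => exists k : nat, match k with O => N1 x | _ => N2 x end).
  - intros x [H|H]; [exists O; auto| exists 1%nat; auto].
  - apply null_union. intros [|k]; auto.
Qed.

Lemma ae_and T (P Q : R -> Prop) : ae_on T P -> ae_on T Q -> ae_on T (fun t => P t /\ Q t).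
Proof.
  intros [N1 [HN1 H1]] [N2 [HN2 H2]]. exists (fun x => N1 x \/ N2 x). split.
  apply null_union2; auto. intros t Ht Hn. split; [apply H1|apply H2]; auto.
Qed.

Lemma ae_mono T (P Q : R -> Prop) : (forall t, 0 < t < T -> P t -> Q t) -> ae_on T P -> ae_on T Q.
Proof. intros H [N [HN H1]]. exists N; split; auto. Qed.

Definition disj (p q : R * R) : Prop :=
  fst p = snd p \/ fst q = snd q \/ snd p <= fst q \/ snd q <= fst p.

Fixpoint pwd (L : list (R * R)) : Prop :=
  match L with [] => True | x :: L' => Forall (disj x) L' /\ pwd L' end.

Definition bleR (x y : R) : bool := if Rle_dec x y then true else false.
Lemma bleR_true x y : bleR x y = true <-> x <= y.
Proof. unfold bleR; destruct (Rle_dec x y); split; intros; auto; discriminate || contradiction. Qed.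
Lemma bleR_false x y : bleR x y = false <-> y < x.
Proof. unfold bleR; destruct (Rle_dec x y); split; intros; try discriminate; try lra; auto. Qed.

Lemma lsum_filter {A} (g : A -> R) (P : A -> bool) L :
  lsum g L = lsum g (filter P L) + lsum g (filter (fun x => negb (P x)) L).
Proof. induction L; simpl; [lra|]. destruct (P a); simpl; rewrite IHL; lra. Qed.

Lemma lsum_zero {A} (g : A -> R) L : Forall (fun x => g x = 0) L -> lsum g L = 0.
Proof. induction 1; simpl; [lra| rewrite H, IHForall; lra]. Qed.

Lemma pwd_filter P L : pwd L -> pwd (filter P L).
Proof.
  induction L as [|x L IH]; simpl; auto. intros [H1 H2].
  destruct (P x); simpl; auto. split; auto.
  apply Forall_forall. intros y Hy. apply filter_In in Hy. rewrite Forall_forall in H1. apply H1; tauto.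
Qed.

Lemma Forall_filter' {A} (Q : A -> Prop) P L : Forall Q L -> Forall Q (filter P L).
Proof. rewrite !Forall_forall. intros H x Hx. apply filter_In in Hx. apply H; tauto. Qed.

Lemma disj_sum_nd (F : R -> R) :
  forall n L a b, (length L <= n)%nat -> a <= b ->
  (forall x y, a <= x -> x <= y -> y <= b -> F x <= F y) ->
  pwd L -> Forall (fun p => a <= fst p /\ fst p < snd p /\ snd p <= b) L ->
  lsum (fun p => F (snd p) - F (fst p)) L <= F b - F a.
Proof.
  induction n as [|n IH]; intros L a b Hlen Hab HF Hpw Hin.
  - destruct L; simpl in *; [|lia]. assert (F a <= F b) by (apply HF; lra). lra.
  - destruct L as [|x L]; simpl. assert (F a <= F b) by (apply HF; lra). lra.
    simpl in Hlen, Hpw. destruct Hpw as [Hx Hpw]. inversion Hin as [|? ? Hxin HLin]; subst.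
    destruct x as [x1 x2]; simpl in *.
    rewrite (lsum_filter _ (fun p => bleR (snd p) x1) L).
    set (L1 := filter (fun p => bleR (snd p) x1) L).
    set (L2 := filter (fun p => negb (bleR (snd p) x1)) L).
    assert (H1 : lsum (fun p => F (snd p) - F (fst p)) L1 <= F x1 - F a).
    { apply IH; try lra.
      - unfold L1; rewrite filter_length_le; lia.
      - intros; apply HF; lra.
      - apply pwd_filter; auto.
      - unfold L1. rewrite Forall_forall in *. intros p Hp. apply filter_In in Hp.
        destruct Hp as [Hp Hb]. apply bleR_true in Hb. specialize (HLin p Hp). lra. }
    assert (H2 : lsum (fun p => F (snd p) - F (fst p)) L2 <= F b - F x2).
    { apply IH; try lra.
      - unfold L2; rewrite filter_length_le; lia.
      - intros; apply HF; lra.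
      - apply pwd_filter; auto.
      - unfold L2. rewrite Forall_forall in *. intros p Hp. apply filter_In in Hp.
        destruct Hp as [Hp Hb]. apply Bool.negb_true_iff, bleR_false in Hb.
        specialize (HLin p Hp). specialize (Hx p Hp). unfold disj in Hx; simpl in Hx. lra. }
    lra.
Qed.

Lemma disj_sum (F : R -> R) L a b : a <= b ->
  (forall x y, a <= x -> x <= y -> y <= b -> F x <= F y) ->
  pwd L -> Forall (fun p => a <= fst p /\ fst p <= snd p /\ snd p <= b) L ->
  lsum (fun p => F (snd p) - F (fst p)) L <= F b - F a.
Proof.
  intros Hab HF Hpw Hin.
  rewrite (lsum_filter _ (fun p => bleR (snd p) (fst p)) L).
  rewrite (lsum_zero _ (filter _ L)).
  - rewrite Rplus_0_l. apply (disj_sum_nd F (length L)); auto.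
    + apply filter_length_le.
    + apply pwd_filter; auto.
    + rewrite Forall_forall in *. intros p Hp. apply filter_In in Hp.
      destruct Hp as [Hp Hb]. apply Bool.negb_true_iff, bleR_false in Hb.
      specialize (Hin p Hp). lra.
  - apply Forall_forall. intros p Hp. apply filter_In in Hp. destruct Hp as [Hp Hb].
    apply bleR_true in Hb. rewrite Forall_forall in Hin. specialize (Hin p Hp).
    replace (snd p) with (fst p) by lra. lra.
Qed.

Definition supr (E : R -> Prop) : R :=
  match excluded_middle_informative (bound E /\ exists x, E x) with
  | left H => proj1_sig (completeness E (proj1 H) (proj2 H))
  | right _ => 0 end.

Lemma supr_spec E : bound E -> (exists x, E x) -> is_lub E (supr E).
Proof.
  intros Hb Hn. unfold supr. destruct (excluded_middle_informative _) as [H|H].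
  - apply (proj2_sig (completeness E (proj1 H) (proj2 H))).
  - exfalso; tauto.
Qed.

Lemma lub_ge E m y : is_lub E m -> E y -> y <= m.
Proof. intros [H _] Hy; apply H; auto. Qed.

Lemma lub_least E m c : is_lub E m -> (forall y, E y -> y <= c) -> m <= c.
Proof. intros [_ H] Hc; apply H; exact Hc. Qed.

Lemma lub_approx E m eps : is_lub E m -> 0 < eps -> exists y, E y /\ m - eps < y.
Proof.
  intros Hm He. apply NNPP. intros Hn.
  assert (m <= m - eps); [|lra].
  apply (lub_least E); auto. intros y Hy. apply Rnot_lt_le. intros Hlt. apply Hn; eauto.
Qed.

Lemma Rdiv_le_0_compat x y : 0 <= x -> 0 < y -> 0 <= x / y.
Proof. intros; unfold Rdiv; apply Rmult_le_pos; [auto| left; apply Rinv_0_lt_compat; auto]. Qed.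

Definition contab (H : R -> R) (a b : R) : Prop :=
  forall t, a <= t <= b -> forall eps, 0 < eps -> exists del, 0 < del /\
    forall s, a <= s <= b -> Rabs (s - t) < del -> Rabs (H s - H t) < eps.

Definition Rs (H : R -> R) (a b x : R) : Prop :=
  a < x < b /\ exists xi, x < xi <= b /\ H x < H xi.

Lemma grid_exists h c : 0 < h -> 0 <= c -> exists k : nat, INR k * h <= c < INR (S k) * h.
Proof.
  intros Hh Hc.
  assert (HK : forall K, c < INR K * h -> exists k : nat, INR k * h <= c < INR (S k) * h).
  { induction K; intros HK. simpl in HK; lra.
    destruct (Rlt_dec c (INR K * h)) as [Hl|Hl]; [apply IHK; auto|].
    exists K; lra. }
  destruct (archimed (c / h)) as [H1 _].
  assert (0 <= IZR (up (c/h))).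
  { assert (0 <= c / h) by (apply Rdiv_le_0_compat; lra). lra. }
  apply (HK (Z.to_nat (up (c / h)))).
  rewrite INR_IZR_INZ, Z2Nat.id.
  - apply Rmult_lt_reg_r with (/ h). apply Rinv_0_lt_compat; lra.
    rewrite Rmult_assoc, Rinv_r by lra. rewrite Rmult_1_r. unfold Rdiv in H1. lra.
  - apply le_IZR; lra.
Qed.

Section RisingSun.
Variables (H : R -> R) (a b : R).
Hypothesis Hab : a < b.
Hypothesis Hc : contab H a b.

Let E := Rs H a b.

Lemma Rs_open x : E x -> exists eta, 0 < eta /\ forall y, Rabs (y - x) < eta -> E y.
Proof.
  intros [[Hax Hxb] [xi [[Hx1 Hx2] Hxi]]].
  destruct (Hc x (conj (Rlt_le _ _ Hax) (Rlt_le _ _ Hxb)) (H xi - H x)) as [del [Hdel Hd]]; [lra|].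
  exists (Rmin del (Rmin (x - a) (xi - x))). split.
  { repeat apply Rmin_glb_lt; lra. }
  intros y Hy.
  pose proof (Rmin_l del (Rmin (x - a) (xi - x))).
  pose proof (Rmin_r del (Rmin (x - a) (xi - x))).
  pose proof (Rmin_l (x - a) (xi - x)). pose proof (Rmin_r (x - a) (xi - x)).
  assert (Hy1 : Rabs (y - x) < del) by lra.
  assert (Hy2 : Rabs (y - x) < x - a) by lra.
  assert (Hy3 : Rabs (y - x) < xi - x) by lra.
  apply Rabs_def2 in Hy2. apply Rabs_def2 in Hy3.
  assert (Hya : a <= y <= b) by lra.
  specialize (Hd y Hya Hy1). apply Rabs_def2 in Hd.
  split; [lra|]. exists xi. split; [lra|]. lra.
Qed.

Definition conn (x y : R) : Prop := forall z, (x <= z <= y \/ y <= z <= x) -> E z.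

Lemma conn_sym x y : conn x y -> conn y x.
Proof. intros H1 z Hz; apply H1; tauto. Qed.

Lemma conn_trans x y z : conn x y -> conn y z -> conn x z.
Proof.
  intros H1 H2 w Hw. destruct Hw as [Hw|Hw];
  destruct (Rle_dec x y); destruct (Rle_dec y z); destruct (Rle_dec w y);
  destruct (Rle_dec x w); destruct (Rle_dec z w);
    first [apply H1; left; lra | apply H1; right; lra | apply H2; left; lra | apply H2; right; lra].
Qed.

Lemma conn_E x y : conn x y -> E y.
Proof. intros H1; apply H1; destruct (Rle_dec x y); [left|right]; lra. Qed.

Lemma E_bounds x : E x -> a < x < b.
Proof. intros [H1 _]; auto. Qed.

Definition cbeta (x : R) : R := supr (conn x).
Definition calpha (x : R) : R := - supr (fun y => conn x (- y)).

Lemma cbeta_lub x : E x -> is_lub (conn x) (cbeta x).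
Proof.
  intros Hx. apply supr_spec.
  - exists b. intros y Hy. apply conn_E, E_bounds in Hy. lra.
  - exists x. intros z Hz. replace z with x by lra. auto.
Qed.

Lemma calpha_lub x : E x -> is_lub (fun y => conn x (- y)) (- calpha x).
Proof.
  intros Hx. unfold calpha. rewrite Ropp_involutive. apply supr_spec.
  - exists (-a). intros y Hy. apply conn_E, E_bounds in Hy. lra.
  - exists (-x). intros z Hz. rewrite Ropp_involutive in Hz. replace z with x by lra. auto.
Qed.

Lemma conn_iff x y : E x -> (conn x y <-> calpha x < y < cbeta x).
Proof.
  intros Hx. pose proof (cbeta_lub x Hx) as Hb. pose proof (calpha_lub x Hx) as Ha.
  split.
  - intros Hxy. destruct (Rs_open y (conn_E _ _ Hxy)) as [eta [Heta Hop]].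
    assert (C1 : conn x (y + eta/2)).
    { intros z Hz. destruct (Rle_dec x y); destruct (Rle_dec z y).
      - destruct Hz as [Hz|Hz]; [apply Hxy; lra|].
        apply Hop. apply Rabs_def1; lra.
      - apply Hop. apply Rabs_def1; lra.
      - apply Hop. apply Rabs_def1; lra.
      - destruct Hz as [Hz|Hz]; [apply Hop; apply Rabs_def1; lra| apply Hxy; lra]. }
    assert (C2 : conn x (- - (y - eta/2))).
    { rewrite Ropp_involutive. intros z Hz. destruct (Rle_dec x y); destruct (Rle_dec z y).
      - destruct Hz as [Hz|Hz]; [|apply Hop; apply Rabs_def1; lra].
        destruct (Rle_dec x z); [apply Hxy; lra| apply Hop; apply Rabs_def1; lra].
      - apply Hxy; lra.
      - apply Hop; apply Rabs_def1; lra.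
      - destruct Hz as [Hz|Hz]; [lra| apply Hxy; lra]. }
    apply (lub_ge _ _ _ Hb) in C1. apply (lub_ge _ _ _ Ha) in C2. lra.
  - intros [H1 H2].
    destruct (lub_approx _ _ (cbeta x - y) Hb) as [y2 [Hy2 Hy2']]; [lra|].
    destruct (lub_approx _ _ (y - calpha x) Ha) as [w [Hw Hw']]; [lra|].
    set (y1 := - w) in *.
    intros z Hz.
    destruct (Rle_dec x z).
    + destruct (Rle_dec z y2); [apply Hy2; lra|].
      apply Hw. unfold y1 in *. lra.
    + destruct (Rle_dec y1 z); [apply Hw; lra|]. apply Hy2. unfold y1 in *. lra.
Qed.

Lemma comp_props x : E x -> a <= calpha x /\ calpha x < x < cbeta x /\ cbeta x <= b.
Proof.
  intros Hx. pose proof (cbeta_lub x Hx) as Hb. pose proof (calpha_lub x Hx) as Ha.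
  assert (Hxx : conn x x) by (intros z Hz; replace z with x by lra; auto).
  pose proof (proj1 (conn_iff x x Hx) Hxx).
  split; [|split; [auto|]].
  - assert (- calpha x <= - a); [|lra].
    apply (lub_least _ _ _ Ha). intros y Hy. apply conn_E, E_bounds in Hy. lra.
  - apply (lub_least _ _ _ Hb). intros y Hy. apply conn_E, E_bounds in Hy. lra.
Qed.

Lemma not_E_beta x : E x -> ~ E (cbeta x).
Proof.
  intros Hx Hb. pose proof (comp_props x Hx) as Hp.
  assert (Hc' : conn x (cbeta x)).
  { intros z Hz. destruct (Req_dec z (cbeta x)) as [->|Hne]; auto.
    apply (conn_E x). apply conn_iff; auto. lra. }
  apply conn_iff in Hc'; auto. lra.
Qed.

Lemma rs_ineq_inner x y : E x -> calpha x < y < cbeta x -> H y <= H (cbeta x).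
Proof.
  intros Hx Hy. pose proof (comp_props x Hx) as Hp.
  apply Rnot_lt_le. intros Hlt.
  set (S := fun t => y <= t <= b /\ H y <= H t).
  assert (HS : is_lub S (supr S)).
  { apply supr_spec. exists b; intros t Ht; unfold S in Ht; lra.
    exists y; unfold S; repeat split; lra. }
  set (ts := supr S) in *.
  assert (Hts1 : y <= ts) by (apply (lub_ge S); auto; unfold S; repeat split; lra).
  assert (Hts2 : ts <= b) by (apply (lub_least S); auto; intros t Ht; unfold S in Ht; lra).
  assert (Hts3 : H y <= H ts).
  { apply Rnot_lt_le. intros Hl.
    destruct (Hc ts (conj (Rle_trans _ _ _ (proj1 Hp) (Rle_trans _ _ _ (Rlt_le _ _ (proj1 Hy)) Hts1)) Hts2) (H y - H ts)) as [del [Hdel Hd]]; [lra|].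
    destruct (lub_approx S ts del HS Hdel) as [s [Hs Hs']].
    assert (s <= ts) by (apply (lub_ge S); auto).
    unfold S in Hs.
    assert (Habs : Rabs (s - ts) < del) by (apply Rabs_def1; lra).
    specialize (Hd s (conj (Rle_trans _ _ _ (proj1 Hp) (Rle_trans _ _ _ (Rlt_le _ _ (proj1 Hy)) (proj1 (proj1 Hs)))) (proj2 (proj1 Hs))) Habs).
    apply Rabs_def2 in Hd. lra. }
  destruct (Rlt_le_dec ts (cbeta x)) as [Hl|Hl].
  - assert (Ets : E ts) by (apply (conn_E x); apply conn_iff; auto; split; lra).
    destruct Ets as [_ [xi [Hxi1 Hxi2]]].
    assert (xi <= ts) by (apply (lub_ge S); auto; unfold S; repeat split; lra). lra.
  - destruct (Req_dec ts (cbeta x)) as [He|He].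
    + rewrite He in Hts3. lra.
    + apply (not_E_beta x Hx). split; [split; lra|].
      exists ts. split; [split; lra| lra].
Qed.

Lemma rs_ineq x : E x -> H (calpha x) <= H (cbeta x).
Proof.
  intros Hx. pose proof (comp_props x Hx) as Hp.
  apply Rnot_lt_le. intros Hl.
  destruct (Hc (calpha x) (conj (proj1 Hp) (Rle_trans _ _ _ (Rlt_le _ _ (proj1 (proj1 (proj2 Hp)))) (Rle_trans _ _ _ (Rlt_le _ _ (proj2 (proj1 (proj2 Hp)))) (proj2 (proj2 Hp))))) (H (calpha x) - H (cbeta x))) as [del [Hdel Hd]]; [lra|].
  set (y := calpha x + Rmin (del/2) ((cbeta x - calpha x)/2)).
  assert (Hm1 : 0 < Rmin (del/2) ((cbeta x - calpha x)/2)) by (apply Rmin_glb_lt; lra).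
  assert (Hm2 : Rmin (del/2) ((cbeta x - calpha x)/2) <= del/2) by apply Rmin_l.
  assert (Hm3 : Rmin (del/2) ((cbeta x - calpha x)/2) <= (cbeta x - calpha x)/2) by apply Rmin_r.
  assert (Hy : calpha x < y < cbeta x) by (unfold y; lra).
  pose proof (rs_ineq_inner x y Hx Hy).
  assert (Habs : Rabs (y - calpha x) < del) by (apply Rabs_def1; unfold y; lra).
  specialize (Hd y ltac:(unfold y; lra) Habs). apply Rabs_def2 in Hd. lra.
Qed.

Definition gridp (n : nat) : R :=
  a + (b - a) * INR (snd (of_nat n)) / INR (S (fst (of_nat n))).

Lemma grid_dense u v : a <= u -> u < v -> exists n, u < gridp n < v.
Proof.
  intros Hu Huv.
  destruct (archimed ((b - a) / (v - u))) as [Ha1 _].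
  set (i := Z.to_nat (up ((b - a) / (v - u)))).
  assert (Hi : (b - a) / (v - u) < INR (S i)).
  { rewrite S_INR. unfold i. rewrite INR_IZR_INZ.
    assert (0 <= (b - a) / (v - u)) by (apply Rdiv_le_0_compat; lra).
    assert (Hz : (0 <= up ((b - a) / (v - u)))%Z) by (apply le_IZR; lra).
    rewrite Z2Nat.id by lia. lra. }
  assert (HSi : 0 < INR (S i)) by (apply lt_0_INR; lia).
  set (h := (b - a) / INR (S i)).
  assert (Hh : 0 < h) by (apply Rdiv_lt_0_compat; lra).
  assert (Hhv : h < v - u).
  { unfold h. apply Rmult_lt_reg_r with (INR (S i)); auto. unfold Rdiv.
    rewrite Rmult_assoc, Rinv_l, Rmult_1_r by lra.
    apply Rmult_lt_reg_r with (/ (v - u)). apply Rinv_0_lt_compat; lra.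
    replace ((v - u) * INR (S i) * / (v - u)) with (INR (S i)) by (field; lra). auto. }
  destruct (grid_exists h (u - a)) as [k Hk]; [lra|lra|].
  exists (to_nat (i, S k)). unfold gridp. rewrite cancel_of_to. simpl fst; simpl snd.
  replace ((b - a) * INR (S k) / INR (S i)) with (INR (S k) * h) by (unfold h; field; lra).
  rewrite S_INR in *. lra.
Qed.

Definition keep (n : nat) : Prop :=
  E (gridp n) /\ forall m, (m < n)%nat -> ~ conn (gridp n) (gridp m).

Definition ral (n : nat) : R :=
  if excluded_middle_informative (keep n) then calpha (gridp n) else a.
Definition rbe (n : nat) : R :=
  if excluded_middle_informative (keep n) then cbeta (gridp n) else a.

Lemma pwd_seq (I : nat -> R * R) : (forall m m', m <> m' -> disj (I m) (I m')) ->
  forall N s, pwd (map I (seq s N)).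
Proof.
  intros HI N. induction N; intros s; simpl; auto. split; auto.
  apply Forall_forall. intros p Hp. apply in_map_iff in Hp. destruct Hp as [m [<- Hm]].
  apply in_seq in Hm. apply HI. lia.
Qed.

Lemma keep_disj m m' : (m' < m)%nat -> keep m -> keep m' ->
  disj (calpha (gridp m), cbeta (gridp m)) (calpha (gridp m'), cbeta (gridp m')).
Proof.
  intros Hlt [Hm Hm'] [Hk _]. unfold disj; simpl.
  apply NNPP; intros Hn.
  set (z := (Rmax (calpha (gridp m)) (calpha (gridp m')) + Rmin (cbeta (gridp m)) (cbeta (gridp m'))) / 2).
  pose proof (comp_props _ Hm). pose proof (comp_props _ Hk).
  assert (Hz1 : calpha (gridp m) < z < cbeta (gridp m)).
  { unfold z. unfold Rmax, Rmin; repeat destruct Rle_dec; lra. }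
  assert (Hz2 : calpha (gridp m') < z < cbeta (gridp m')).
  { unfold z. unfold Rmax, Rmin; repeat destruct Rle_dec; lra. }
  apply (Hm' m' Hlt).
  apply conn_trans with z; [apply conn_iff; auto|].
  apply conn_sym, conn_iff; auto.
Qed.

Lemma rising_sun : exists al be : nat -> R,
  (forall n, a <= al n /\ al n <= be n /\ be n <= b) /\
  (forall n, H (al n) <= H (be n)) /\
  (forall x, Rs H a b x -> exists n, al n < x < be n) /\
  (forall N, pwd (map (fun n => (al n, be n)) (seq 0 N))).
Proof.
  exists ral, rbe. split; [|split; [|split]].
  - intros n. unfold ral, rbe. destruct (excluded_middle_informative (keep n)) as [[Hk _]|_].
    + pose proof (comp_props _ Hk). lra.
    + lra.
  - intros n. unfold ral, rbe. destruct (excluded_middle_informative (keep n)) as [[Hk _]|_].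
    + apply rs_ineq; auto.
    + lra.
  - intros x Hx. fold E in Hx. pose proof (comp_props x Hx) as Hp.
    assert (Hex : exists n, calpha x < gridp n < cbeta x) by (apply grid_dense; lra).
    assert (Hmin : exists n, calpha x < gridp n < cbeta x /\
               forall m, (m < n)%nat -> ~ (calpha x < gridp m < cbeta x)).
    { destruct Hex as [n Hn]. revert Hn. induction n as [n IH] using lt_wf_ind. intros Hn.
      destruct (classic (exists m, (m < n)%nat /\ calpha x < gridp m < cbeta x)) as [[m [Hmn Hm]]|Hno].
      - apply (IH m Hmn Hm).
      - exists n; split; auto. intros m Hm Hm'. apply Hno; eauto. }
    destruct Hmin as [n [Hn Hnm]].
    assert (Hcx : conn x (gridp n)) by (apply conn_iff; auto).
    assert (Hkeep : keep n).
    { split; [apply (conn_E x); auto|].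
      intros m Hm Hc'. apply (Hnm m Hm). apply conn_iff; auto.
      apply conn_trans with (gridp n); auto. }
    exists n. unfold ral, rbe. destruct (excluded_middle_informative (keep n)); [|contradiction].
    apply conn_iff; [apply (conn_E x); auto|]. apply conn_sym; auto.
  - intros N. apply pwd_seq. intros m m' Hne.
    unfold ral, rbe.
    destruct (excluded_middle_informative (keep m)) as [Hk|Hk];
    destruct (excluded_middle_informative (keep m')) as [Hk'|Hk'];
    try (unfold disj; simpl; first [left; reflexivity| right; left; reflexivity]).
    destruct (proj1 (Nat.lt_gt_cases m m') Hne) as [Hl|Hl].
    + pose proof (keep_disj m' m Hl Hk' Hk) as HH. unfold disj in *. simpl in *. tauto.
    + apply keep_disj; auto.
Qed.

End RisingSun.

Definition mono (F : R -> R) (a b : R) : Prop :=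
  forall x y, a <= x -> x <= y -> y <= b -> F x <= F y.

Lemma contab_sub F a b a' b' : contab F a b -> a <= a' -> b' <= b -> contab F a' b'.
Proof.
  intros H H1 H2 t Ht eps Heps. destruct (H t ltac:(lra) eps Heps) as [d [Hd Hd']].
  exists d; split; auto. intros s Hs; apply Hd'; lra.
Qed.

Lemma contab_lin F a b k : contab F a b -> contab (fun x => F x + k * x) a b.
Proof.
  intros H t Ht eps Heps. destruct (H t Ht (eps/2)) as [d [Hd Hd']]; [lra|].
  assert (Hk : 0 < Rabs k + 1) by (pose proof (Rabs_pos k); lra).
  exists (Rmin d (eps / 2 / (Rabs k + 1))). split.
  { apply Rmin_glb_lt; auto. apply Rdiv_lt_0_compat; lra. }
  intros s Hs Hst.
  pose proof (Rmin_l d (eps / 2 / (Rabs k + 1))). pose proof (Rmin_r d (eps / 2 / (Rabs k + 1))).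
  specialize (Hd' s Hs ltac:(lra)).
  replace (F s + k * s - (F t + k * t)) with ((F s - F t) + k * (s - t)) by ring.
  eapply Rle_lt_trans; [apply Rabs_triang|]. rewrite Rabs_mult.
  assert (Rabs k * Rabs (s - t) <= Rabs k * (eps / 2 / (Rabs k + 1))).
  { apply Rmult_le_compat_l; [apply Rabs_pos| lra]. }
  assert (Rabs k * (eps / 2 / (Rabs k + 1)) < eps / 2).
  { apply Rmult_lt_reg_r with (Rabs k + 1); auto. unfold Rdiv.
    replace (Rabs k * (eps * / 2 * / (Rabs k + 1)) * (Rabs k + 1)) with (Rabs k * (eps * /2)) by (field; lra).
    pose proof (Rabs_pos k). nra. }
  lra.
Qed.

Lemma contab_refl F a b : contab F a b -> contab (fun y => - F (- y)) (- b) (- a).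
Proof.
  intros H t Ht eps Heps. destruct (H (- t) ltac:(lra) eps Heps) as [d [Hd Hd']].
  exists d; split; auto. intros s Hs Hst.
  replace (- F (- s) - - F (- t)) with (- (F (- s) - F (- t))) by ring. rewrite Rabs_Ropp.
  apply Hd'; [lra|]. replace (- s - - t) with (- (s - t)) by ring. rewrite Rabs_Ropp; auto.
Qed.

Lemma contab_refl' F a b : contab F a b -> contab (fun y => F (- y)) (- b) (- a).
Proof.
  intros H t Ht eps Heps. destruct (H (- t) ltac:(lra) eps Heps) as [d [Hd Hd']].
  exists d; split; auto. intros s Hs Hst.
  apply Hd'; [lra|]. replace (- s - - t) with (- (s - t)) by ring. rewrite Rabs_Ropp; auto.
Qed.

Lemma mono_refl F a b : mono F a b -> mono (fun y => - F (- y)) (- b) (- a).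
Proof. intros H x y H1 H2 H3. assert (F (- y) <= F (- x)) by (apply H; lra). lra. Qed.

Lemma sum_lsum (g : nat -> R) N : sum_f_R0 g N = lsum g (seq 0 (S N)).
Proof. rewrite lsum_seq; auto. Qed.

Lemma rs_cov F a b C : a < b -> mono F a b -> contab F a b -> 0 < C ->
  cov (Rs (fun x => F x + (- C) * x) a b) ((F b - F a) / C).
Proof.
  intros Hab Hm Hc HC.
  destruct (rising_sun (fun x => F x + (- C) * x) a b Hab (contab_lin F a b (- C) Hc))
    as [al [be [H1 [H2 [H3 H4]]]]].
  exists al, be. split; [intros n; specialize (H1 n); lra|]. split; auto.
  intros N.
  assert (Hs : sum_f_R0 (fun k => F (be k) - F (al k)) N <= F b - F a).
  { rewrite sum_lsum.
    rewrite <- (lsum_map (fun p => F (snd p) - F (fst p)) (fun n => (al n, be n))).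
    apply disj_sum; auto; [lra|].
    apply Forall_forall. intros p Hp. apply in_map_iff in Hp. destruct Hp as [n [<- _]].
    simpl. specialize (H1 n). lra. }
  apply Rmult_le_reg_l with C; auto.
  replace (C * ((F b - F a) / C)) with (F b - F a) by (field; lra).
  eapply Rle_trans; [|exact Hs].
  rewrite scal_sum. apply sum_f_R0_le. intros k _. specialize (H2 k). lra.
Qed.

Definition InfR (F : R -> R) (a b x : R) : Prop :=
  a < x < b /\ forall M, forall del, 0 < del -> exists h, 0 < h < del /\ F (x + h) - F x > M * h.

Lemma InfR_null F a b : a < b -> mono F a b -> contab F a b -> null_set (InfR F a b).
Proof.
  intros Hab Hm Hc. apply cov_null. intros eps Heps.
  assert (HF : F a <= F b) by (apply Hm; lra).
  set (M := (F b - F a + 1) / eps).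
  assert (HM : 0 < M) by (apply Rdiv_lt_0_compat; lra).
  apply cov_mono with (Rs (fun x => F x + (- M) * x) a b) ((F b - F a) / M).
  - intros x [Hx Hinf]. destruct (Hinf M (b - x)) as [h [Hh Hh']]; [lra|].
    split; auto. exists (x + h). split; [lra|]. lra.
  - unfold M. apply Rmult_le_reg_r with ((F b - F a + 1) / eps).
    apply Rdiv_lt_0_compat; lra.
    replace ((F b - F a) / ((F b - F a + 1) / eps) * ((F b - F a + 1) / eps)) with (F b - F a) by (field; lra).
    replace (eps * ((F b - F a + 1) / eps)) with (F b - F a + 1) by (field; lra). lra.
  - apply rs_cov; auto.
Qed.

Definition Cset (F : R -> R) (c C x : R) : Prop :=
  (forall del, 0 < del -> exists h, 0 < h < del /\ F x - F (x - h) < c * h) /\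
  (forall del, 0 < del -> exists h, 0 < h < del /\ F (x + h) - F x > C * h).

Lemma stage F a b c C al0 be0 : mono F a b -> contab F a b -> 0 < c -> c < C ->
  a <= al0 -> al0 < be0 -> be0 <= b ->
  cov (fun x => Cset F c C x /\ al0 < x < be0) (c / C * (be0 - al0)).
Proof.
  intros Hm Hc Hc0 HcC H1 H2 H3.
  set (H1f := fun y => (fun z => F z + (- c) * z) (- y)).
  assert (Hcont1 : contab H1f (- be0) (- al0)).
  { exact (contab_refl' _ al0 be0 (contab_lin F al0 be0 (-c) (contab_sub F a b al0 be0 Hc H1 H3))). }
  destruct (rising_sun H1f (- be0) (- al0) ltac:(lra) Hcont1) as [u [v [K1 [K2 [K3 K4]]]]].
  set (p := fun k => - v k). set (q := fun k => - u k).
  assert (Hpq : forall k, al0 <= p k /\ p k <= q k /\ q k <= be0).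
  { intros k; specialize (K1 k); unfold p, q; lra. }
  assert (Hinc : forall k, F (q k) - F (p k) <= c * (q k - p k)).
  { intros k; specialize (K2 k). unfold H1f, p, q in *. cbv beta in K2. lra. }
  apply cov_mono with (fun x => exists k, Cset F c C x /\ p k < x < q k) (c / C * (be0 - al0)); [|lra|].
  { intros x [HC Hx].
    assert (Hr : Rs H1f (- be0) (- al0) (- x)).
    { split; [lra|]. destruct HC as [Hl _]. destruct (Hl (x - al0)) as [h [Hh Hh']]; [lra|].
      exists (- x + h). split; [lra|]. unfold H1f. rewrite !Ropp_plus_distr, !Ropp_involutive.
      replace (x + - h) with (x - h) by ring. lra. }
    destruct (K3 _ Hr) as [k Hk]. exists k. split; auto. unfold p, q. lra. }
  apply cov_union with (E := fun k x => Cset F c C x /\ p k < x < q k)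
                       (S := fun k => c / C * (q k - p k)).
  - intros k. destruct (Rlt_le_dec (p k) (q k)) as [Hlt|Hle].
    + apply cov_mono with (Rs (fun x => F x + (- C) * x) (p k) (q k)) ((F (q k) - F (p k)) / C).
      * intros x [[_ Hr] Hx]. destruct (Hr (q k - x)) as [h [Hh Hh']]; [lra|].
        split; auto. exists (x + h). split; [lra|]. lra.
      * unfold Rdiv. replace (c * / C * (q k - p k)) with ((c * (q k - p k)) * / C) by ring.
        apply Rmult_le_compat_r; [left; apply Rinv_0_lt_compat; lra| apply Hinc].
      * apply rs_cov; auto. intros x y ? ? ?; apply Hm; specialize (Hpq k); lra.
        eapply contab_sub; eauto; specialize (Hpq k); lra.
        lra.
    + apply cov_mono with (fun _ : R => False) 0.
      * intros x [_ Hx]; lra.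
      * specialize (Hpq k). assert (q k - p k = 0) by lra. rewrite H. lra.
      * apply cov_empty; auto.
  - intros K.
    replace (sum_f_R0 (fun k => c / C * (q k - p k)) K) with (c / C * sum_f_R0 (fun k => q k - p k) K).
    2:{ rewrite scal_sum. apply sum_eq. intros; ring. }
    apply Rmult_le_compat_l.
    { apply Rdiv_le_0_compat; lra. }
    assert (Hs : sum_f_R0 (fun k => v k - u k) K <= - al0 - - be0).
    { rewrite sum_lsum.
      rewrite <- (lsum_map (fun pr => (fun z => z) (snd pr) - (fun z => z) (fst pr)) (fun n => (u n, v n))).
      apply (disj_sum (fun z => z)); [lra| intros; lra| apply K4|].
      apply Forall_forall. intros pr Hp. apply in_map_iff in Hp. destruct Hp as [n [<- _]].
      simpl. specialize (K1 n). lra. }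
    replace (sum_f_R0 (fun k => q k - p k) K) with (sum_f_R0 (fun k => v k - u k) K).
    lra. apply sum_eq; intros; unfold p, q; ring.
Qed.

Lemma Cset_null F a b c C : a < b -> mono F a b -> contab F a b -> c < C ->
  null_set (fun x => Cset F c C x /\ a < x < b).
Proof.
  intros Hab Hm Hc HcC.
  destruct (Rle_lt_dec c 0) as [Hc0|Hc0].
  { apply null_subset with (fun _ => False); [|apply cov_null; intros eps Heps; eapply cov_mono; [intros x Hx; exact Hx| |apply cov_empty; auto]; lra].
    intros x [[Hl _] Hx]. destruct (Hl (x - a)) as [h [Hh Hh']]; [lra|].
    assert (F (x - h) <= F x) by (apply Hm; lra). nra. }
  set (rho := c / C).
  assert (Hrho : 0 < rho < 1).
  { unfold rho; split. apply Rdiv_lt_0_compat; lra.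
    apply Rmult_lt_reg_r with C; [lra|]. unfold Rdiv; rewrite Rmult_assoc, Rinv_l; lra. }
  assert (Hn : forall n, cov (fun x => Cset F c C x /\ a < x < b) (rho ^ n * (b - a))).
  { induction n.
    - simpl. rewrite Rmult_1_l. apply cov_interval; [lra|]. intros x [_ Hx]; auto.
    - destruct IHn as [u [v [U1 [U2 U3]]]].
      apply cov_mono with (fun x => exists k, Cset F c C x /\ Rmax a (u k) < x < Rmin b (v k))
                          (rho ^ (S n) * (b - a)).
      + intros x [HC Hx]. destruct (U2 x (conj HC Hx)) as [k Hk]. exists k. split; auto.
        split; [apply Rmax_lub_lt| apply Rmin_glb_lt]; lra.
      + lra.
      + apply cov_union with (S := fun k => rho * (v k - u k)).
        * intros k. destruct (Rlt_le_dec (Rmax a (u k)) (Rmin b (v k))) as [Hl|Hl].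
          -- eapply cov_mono; [intros x Hx; exact Hx| |apply stage with (a := a) (b := b); [auto|auto|lra|lra|apply Rmax_l|exact Hl|apply Rmin_l]].
             fold rho. apply Rmult_le_compat_l; [lra|].
             pose proof (Rmax_r a (u k)). pose proof (Rmin_r b (v k)). lra.
          -- eapply cov_mono; [| |apply (cov_empty (fun _ => False)); auto].
             ++ intros x [_ Hx]; lra.
             ++ specialize (U1 k). nra.
        * intros K. replace (sum_f_R0 (fun k => rho * (v k - u k)) K) with (rho * sum_f_R0 (fun k => v k - u k) K).
          2:{ rewrite scal_sum. apply sum_eq; intros; ring. }
          simpl. rewrite Rmult_assoc. apply Rmult_le_compat_l; [lra|]. apply U3. }
  apply cov_null. intros eps Heps.
  destruct (pow_lt_1_zero rho ltac:(rewrite Rabs_pos_eq; lra) (eps / (b - a))) as [N HN].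
  { apply Rdiv_lt_0_compat; lra. }
  specialize (HN N (Nat.le_refl _)). rewrite Rabs_pos_eq in HN by (apply pow_le; lra).
  eapply cov_mono; [intros x Hx; exact Hx| |apply (Hn N)].
  apply Rmult_lt_compat_r with (r := b - a) in HN; [|lra].
  replace (eps / (b - a) * (b - a)) with eps in HN by (field; lra). lra.
Qed.

Lemma div_le_iff A h r : 0 < h -> (A / h <= r <-> A <= r * h).
Proof.
  intros Hh. split; intros H.
  - apply Rmult_le_compat_r with (r := h) in H; [|lra].
    replace (A / h * h) with A in H by (field; lra). lra.
  - apply Rmult_le_reg_r with h; auto. replace (A / h * h) with A by (field; lra). lra.
Qed.

Lemma div_lt_iff A h r : 0 < h -> (r < A / h <-> r * h < A).
Proof.
  intros Hh. split; intros H.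
  - apply Rmult_lt_compat_r with (r := h) in H; [|lra].
    replace (A / h * h) with A in H by (field; lra). lra.
  - apply Rmult_lt_reg_r with h; auto. replace (A / h * h) with A by (field; lra). lra.
Qed.

Lemma div_neg A h : h <> 0 -> A / h = (- A) / (- h).
Proof. intros; field; auto. Qed.

Lemma null_refl N : null_set N -> null_set (fun x => N (- x)).
Proof.
  intros H eps Heps. destruct (H eps Heps) as [a [b [H1 [H2 H3]]]].
  exists (fun n => - b n), (fun n => - a n). repeat split.
  - intros n; specialize (H1 n); lra.
  - intros x Hx. destruct (H2 _ Hx) as [n Hn]. exists n; lra.
  - intros n. eapply Rle_lt_trans; [|exact (H3 n)]. right. apply sum_eq; intros; ring.
Qed.

Lemma Z2Nat_nonpos z : (z <= 0)%Z -> Z.to_nat z = 0%nat.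
Proof. intros H. destruct z; simpl; auto. lia. Qed.

Definition rr (n : nat) : R :=
  (INR (fst (of_nat (snd (of_nat n)))) - INR (snd (of_nat (snd (of_nat n))))) / INR (S (fst (of_nat n))).
Definition ss (n : nat) : R := rr n + 1 / INR (S (fst (of_nat n))).

Lemma rr_ss n : rr n < ss n.
Proof.
  unfold ss. assert (0 < 1 / INR (S (fst (of_nat n)))).
  { apply Rdiv_lt_0_compat; [lra| apply lt_0_INR; lia]. } lra.
Qed.

Lemma dense_pairs l u : l < u -> exists n, l < rr n /\ ss n < u.
Proof.
  intros Hlu.
  destruct (archimed (3 / (u - l))) as [Ha1 _].
  assert (H3 : 0 < 3 / (u - l)) by (apply Rdiv_lt_0_compat; lra).
  assert (Hz0 : (0 <= up (3 / (u - l)))%Z) by (apply le_IZR; lra).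
  set (i := Z.to_nat (up (3 / (u - l)))).
  assert (Hi : 3 / (u - l) < INR (S i)).
  { rewrite S_INR. unfold i. rewrite INR_IZR_INZ, Z2Nat.id by lia. lra. }
  assert (HSi : 0 < INR (S i)) by (apply lt_0_INR; lia).
  assert (Hstep : 3 / INR (S i) < u - l).
  { apply Rmult_lt_reg_r with (INR (S i)); auto. replace (3 / INR (S i) * INR (S i)) with 3 by (field; lra).
    apply Rmult_lt_compat_r with (r := u - l) in Hi; [|lra].
    replace (3 / (u - l) * (u - l)) with 3 in Hi by (field; lra). lra. }
  set (z := up (l * INR (S i))).
  destruct (archimed (l * INR (S i))) as [Hz1 Hz2]. fold z in Hz1, Hz2.
  set (k := Z.to_nat z). set (j := Z.to_nat (- z)).
  assert (Hkj : INR k - INR j = IZR z).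
  { unfold k, j. rewrite !INR_IZR_INZ. destruct (Z_le_gt_dec 0 z).
    - rewrite Z2Nat.id by lia. rewrite (Z2Nat_nonpos (- z)) by lia. simpl. lra.
    - rewrite (Z2Nat_nonpos z) by lia. rewrite Z2Nat.id by lia. rewrite opp_IZR. simpl. lra. }
  exists (to_nat (i, to_nat (k, j))). unfold ss, rr. rewrite cancel_of_to. cbn [fst snd]. rewrite cancel_of_to. cbn [fst snd].
  rewrite Hkj.
  split.
  - apply div_lt_iff; auto.
  - assert (IZR z / INR (S i) <= l + 1 / INR (S i)).
    { apply div_le_iff; auto. replace ((l + 1 / INR (S i)) * INR (S i)) with (l * INR (S i) + 1) by (field; lra). lra. }
    assert (1 / INR (S i) < (u - l) / 3).
    { replace (1 / INR (S i)) with (3 / INR (S i) / 3) by (field; lra). lra. }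
    lra.
Qed.

Section Point.
Variables (F : R -> R) (x : R).

Definition lowR r := forall del, 0 < del -> exists h, 0 < h < del /\ F (x + h) - F x <= r * h.
Definition lowL r := forall del, 0 < del -> exists h, 0 < h < del /\ F x - F (x - h) <= r * h.
Definition highR s := forall del, 0 < del -> exists h, 0 < h < del /\ F (x + h) - F x > s * h.
Definition highL s := forall del, 0 < del -> exists h, 0 < h < del /\ F x - F (x - h) > s * h.
Definition Ft := fun y => - F (- y).

Definition pairbad : Prop := exists n, Cset F (rr n) (ss n) x \/ Cset Ft (rr n) (ss n) (- x).

Lemma bad1 r0 s0 : r0 < s0 -> lowL r0 -> highR s0 -> pairbad.
Proof.
  intros Hrs Hl Hh. destruct (dense_pairs r0 s0 Hrs) as [n [H1 H2]]. pose proof (rr_ss n).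
  exists n; left. split.
  - intros del Hd. destruct (Hl del Hd) as [h [Hh1 Hh2]]. exists h; split; auto. nra.
  - intros del Hd. destruct (Hh del Hd) as [h [Hh1 Hh2]]. exists h; split; auto. nra.
Qed.

Lemma bad2 r0 s0 : r0 < s0 -> lowR r0 -> highL s0 -> pairbad.
Proof.
  intros Hrs Hl Hh. destruct (dense_pairs r0 s0 Hrs) as [n [H1 H2]]. pose proof (rr_ss n).
  exists n; right. split.
  - intros del Hd. destruct (Hl del Hd) as [h [Hh1 Hh2]]. exists h; split; auto.
    unfold Ft. replace (- (- x - h)) with (x + h) by ring. rewrite Ropp_involutive. nra.
  - intros del Hd. destruct (Hh del Hd) as [h [Hh1 Hh2]]. exists h; split; auto.
    unfold Ft. replace (- (- x + h)) with (x - h) by ring. rewrite Ropp_involutive. nra.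
Qed.

Lemma not_lowL t : ~ lowL t -> forall t', t' < t -> highL t'.
Proof.
  intros Hn t' Ht' del Hd. apply not_all_ex_not in Hn. destruct Hn as [d Hn].
  apply imply_to_and in Hn. destruct Hn as [Hd0 Hn].
  exists (Rmin del d / 2). assert (0 < Rmin del d) by (apply Rmin_glb_lt; auto).
  pose proof (Rmin_l del d). pose proof (Rmin_r del d).
  split; [lra|]. apply Rnot_le_lt. intros Hle. apply Hn. exists (Rmin del d / 2).
  split; [lra|]. nra.
Qed.

Lemma not_highR t : ~ highR t -> lowR t.
Proof.
  intros Hn del Hd. apply not_all_ex_not in Hn. destruct Hn as [d Hn].
  apply imply_to_and in Hn. destruct Hn as [Hd0 Hn].
  exists (Rmin del d / 2). assert (0 < Rmin del d) by (apply Rmin_glb_lt; auto).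
  pose proof (Rmin_l del d). pose proof (Rmin_r del d).
  split; [lra|]. apply Rnot_lt_le. intros Hle. apply Hn. exists (Rmin del d / 2).
  split; [lra|]. lra.
Qed.

Lemma lowR_mono r r' : r <= r' -> lowR r -> lowR r'.
Proof. intros H1 H2 del Hd. destruct (H2 del Hd) as [h [Hh Hh']]. exists h; split; auto. nra. Qed.
Lemma lowL_mono r r' : r <= r' -> lowL r -> lowL r'.
Proof. intros H1 H2 del Hd. destruct (H2 del Hd) as [h [Hh Hh']]. exists h; split; auto. nra. Qed.
Lemma highR_mono r r' : r' <= r -> highR r -> highR r'.
Proof. intros H1 H2 del Hd. destruct (H2 del Hd) as [h [Hh Hh']]. exists h; split; auto. nra. Qed.
Lemma highL_mono r r' : r' <= r -> highL r -> highL r'.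
Proof. intros H1 H2 del Hd. destruct (H2 del Hd) as [h [Hh Hh']]. exists h; split; auto. nra. Qed.

Lemma four_cases r0 s0 : r0 < s0 -> (lowR r0 \/ lowL r0) -> (highR s0 \/ highL s0) -> pairbad.
Proof.
  intros Hrs Hlow Hhigh. set (t := (r0 + s0) / 2).
  destruct Hlow as [HlR|HlL]; destruct Hhigh as [HhR|HhL].
  - destruct (classic (lowL t)) as [Ht|Ht].
    + apply (bad1 t s0); auto. unfold t; lra.
    + apply (bad2 r0 ((r0 + t) / 2)); auto. unfold t; lra.
      apply (not_lowL t); auto. unfold t; lra.
  - apply (bad2 r0 s0); auto.
  - apply (bad1 r0 s0); auto.
  - destruct (classic (highR t)) as [Ht|Ht].
    + apply (bad1 r0 t); auto. unfold t; lra.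
    + apply (bad2 t s0); auto. unfold t; lra. apply not_highR; auto.
Qed.

Definition slope h := (F (x + h) - F x) / h.

Lemma low2_split r : (forall del, 0 < del -> exists h, 0 < Rabs h < del /\ slope h <= r) ->
  lowR r \/ lowL r.
Proof.
  intros H. apply NNPP. intros Hn. apply not_or_and in Hn. destruct Hn as [HR HL].
  unfold lowR, lowL in *.
  apply not_all_ex_not in HR. destruct HR as [d1 HR]. apply imply_to_and in HR. destruct HR as [Hd1 HR].
  apply not_all_ex_not in HL. destruct HL as [d2 HL]. apply imply_to_and in HL. destruct HL as [Hd2 HL].
  destruct (H (Rmin d1 d2)) as [h [Hh Hs]]. apply Rmin_glb_lt; auto.
  pose proof (Rmin_l d1 d2). pose proof (Rmin_r d1 d2). unfold slope in Hs.
  destruct (Rlt_le_dec 0 h) as [Hp|Hp].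
  - rewrite Rabs_pos_eq in Hh by lra. apply HR. exists h. split; [lra|].
    apply div_le_iff; auto.
  - assert (h <> 0) by (intros ->; rewrite Rabs_R0 in Hh; lra).
    rewrite Rabs_left1 in Hh by lra. apply HL. exists (- h). split; [lra|].
    rewrite div_neg in Hs by auto. apply div_le_iff in Hs; [|lra].
    replace (x - - h) with (x + h) by ring. lra.
Qed.

Lemma high2_split s : (forall del, 0 < del -> exists h, 0 < Rabs h < del /\ slope h > s) ->
  highR s \/ highL s.
Proof.
  intros H. apply NNPP. intros Hn. apply not_or_and in Hn. destruct Hn as [HR HL].
  unfold highR, highL in *.
  apply not_all_ex_not in HR. destruct HR as [d1 HR]. apply imply_to_and in HR. destruct HR as [Hd1 HR].
  apply not_all_ex_not in HL. destruct HL as [d2 HL]. apply imply_to_and in HL. destruct HL as [Hd2 HL].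
  destruct (H (Rmin d1 d2)) as [h [Hh Hs]]. apply Rmin_glb_lt; auto.
  pose proof (Rmin_l d1 d2). pose proof (Rmin_r d1 d2). unfold slope in Hs.
  destruct (Rlt_le_dec 0 h) as [Hp|Hp].
  - rewrite Rabs_pos_eq in Hh by lra. apply HR. exists h. split; [lra|].
    apply div_lt_iff in Hs; [lra|lra].
  - assert (h <> 0) by (intros ->; rewrite Rabs_R0 in Hh; lra).
    rewrite Rabs_left1 in Hh by lra. apply HL. exists (- h). split; [lra|].
    rewrite div_neg in Hs by auto. apply div_lt_iff in Hs; [|lra].
    replace (x - - h) with (x + h) by ring. lra.
Qed.

Lemma deriv_good (M del0 : R) : 0 < del0 ->
  (forall h, 0 < Rabs h < del0 -> 0 <= slope h <= M) -> ~ pairbad ->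
  exists l, derivable_pt_lim F x l.
Proof.
  intros Hd0 Hb Hgood.
  set (S := fun y => forall del, 0 < del -> exists h, 0 < Rabs h < del /\ slope h > y).
  assert (HS : is_lub S (supr S)).
  { apply supr_spec.
    - exists M. intros y Hy. destruct (Hy del0 Hd0) as [h [Hh Hh']]. specialize (Hb h ltac:(lra)). lra.
    - exists (-1). intros del Hd. exists (Rmin del del0 / 2).
      assert (0 < Rmin del del0) by (apply Rmin_glb_lt; auto).
      pose proof (Rmin_l del del0). pose proof (Rmin_r del del0).
      rewrite Rabs_pos_eq by lra. split; [lra|].
      specialize (Hb (Rmin del del0 / 2)). rewrite Rabs_pos_eq in Hb by lra. specialize (Hb ltac:(lra)). lra. }
  set (L := supr S) in *. exists L.
  assert (Hup : forall eps, 0 < eps -> exists del, 0 < del /\ forall h, 0 < Rabs h < del -> slope h < L + eps).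
  { intros eps Heps. apply NNPP. intros Hn.
    assert (S (L + eps / 2)).
    { intros del Hd. apply NNPP; intros Hn2. apply Hn. exists del; split; auto.
      intros h Hh. apply Rnot_le_lt. intros Hle. apply Hn2. exists h. split; auto. lra. }
    apply (lub_ge _ _ _ HS) in H. lra. }
  assert (Hlow : forall eps, 0 < eps -> exists del, 0 < del /\ forall h, 0 < Rabs h < del -> L - eps < slope h).
  { intros eps Heps. apply NNPP. intros Hn.
    destruct (lub_approx _ _ (eps / 2) HS) as [y [Hy Hy']]; [lra|].
    apply Hgood. apply (four_cases (L - eps) y); [lra| |].
    - apply low2_split. intros del Hd. apply NNPP; intros Hn2. apply Hn. exists del; split; auto.
      intros h Hh. apply Rnot_le_lt. intros Hle. apply Hn2. exists h. split; auto.
    - apply high2_split. auto. }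
  intros eps Heps.
  destruct (Hup eps Heps) as [d1 [Hd1 H1]]. destruct (Hlow eps Heps) as [d2 [Hd2 H2]].
  assert (Hm : 0 < Rmin d1 d2) by (apply Rmin_glb_lt; auto).
  exists (mkposreal _ Hm). intros h Hh Hhd. simpl in Hhd.
  pose proof (Rmin_l d1 d2). pose proof (Rmin_r d1 d2).
  assert (0 < Rabs h) by (apply Rabs_pos_lt; auto).
  specialize (H1 h ltac:(lra)). specialize (H2 h ltac:(lra)). unfold slope in *.
  apply Rabs_def1; lra.
Qed.

End Point.

Lemma notInf_bound (P : R -> R -> Prop) :
  ~ (forall M del, 0 < del -> exists h, 0 < h < del /\ P M h) ->
  exists M d, 0 < d /\ forall h, 0 < h < d -> ~ P M h.
Proof.
  intros Hn. apply not_all_ex_not in Hn. destruct Hn as [M Hn].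
  apply not_all_ex_not in Hn. destruct Hn as [d Hn]. apply imply_to_and in Hn.
  destruct Hn as [Hd Hn]. exists M, d; split; auto. intros h Hh HP. apply Hn; eauto.
Qed.

Lemma mono_diff_ae F a b : a < b -> mono F a b -> contab F a b ->
  exists N, null_set N /\ forall x, a < x < b -> ~ N x -> exists l, derivable_pt_lim F x l.
Proof.
  intros Hab Hm Hc.
  exists (fun x => InfR F a b x \/ InfR (Ft F) (- b) (- a) (- x) \/ (a < x < b /\ pairbad F x)).
  split.
  - apply null_union2; [apply InfR_null; auto|].
    apply null_union2.
    + apply (null_refl (InfR (Ft F) (- b) (- a))). apply InfR_null; [lra| apply mono_refl; auto| apply contab_refl; auto].
    + apply null_subset with (fun x => exists n, (Cset F (rr n) (ss n) x /\ a < x < b) \/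
                                  (fun y => Cset (Ft F) (rr n) (ss n) y /\ - b < y < - a) (- x)).
      * intros x [Hx [n [Hn|Hn]]]; exists n; [left|right]; split; auto. lra.
      * apply null_union. intros n. apply null_union2.
        -- apply Cset_null; auto. apply rr_ss.
        -- apply (null_refl (fun y => Cset (Ft F) (rr n) (ss n) y /\ - b < y < - a)).
           apply Cset_null; [lra| apply mono_refl; auto| apply contab_refl; auto| apply rr_ss].
  - intros x Hx HN.
    apply not_or_and in HN. destruct HN as [H1 HN]. apply not_or_and in HN. destruct HN as [H2 H3].
    assert (H1' : ~ (forall M del, 0 < del -> exists h, 0 < h < del /\ F (x + h) - F x > M * h))
      by (intros Hc'; apply H1; split; auto).
    assert (H2' : ~ (forall M del, 0 < del -> exists h, 0 < h < del /\ F x - F (x - h) > M * h)).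
    { intros Hc'; apply H2; split; [lra|]. intros M del Hd. destruct (Hc' M del Hd) as [h [Hh Hh']].
      exists h; split; auto. unfold Ft. replace (- (- x + h)) with (x - h) by ring.
      rewrite Ropp_involutive. lra. }
    apply notInf_bound in H1'. destruct H1' as [M1 [d1 [Hd1 HM1]]].
    apply notInf_bound in H2'. destruct H2' as [M2 [d2 [Hd2 HM2]]].
    pose proof (Rmin_l (Rmin d1 d2) (Rmin (x - a) (b - x))).
    pose proof (Rmin_r (Rmin d1 d2) (Rmin (x - a) (b - x))).
    set (d0 := Rmin (Rmin d1 d2) (Rmin (x - a) (b - x))) in *.
    assert (Hd0 : 0 < d0) by (unfold d0; repeat apply Rmin_glb_lt; lra).
    pose proof (Rmin_l d1 d2). pose proof (Rmin_r d1 d2).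
    pose proof (Rmin_l (x - a) (b - x)). pose proof (Rmin_r (x - a) (b - x)).
    apply (deriv_good F x (Rmax M1 M2) d0 Hd0).
    + intros h Hh. pose proof (Rmax_l M1 M2). pose proof (Rmax_r M1 M2). unfold slope.
      destruct (Rlt_le_dec 0 h) as [Hp|Hp].
      * rewrite Rabs_pos_eq in Hh by lra.
        assert (F x <= F (x + h)) by (apply Hm; lra).
        assert (F (x + h) - F x <= M1 * h) by (apply Rnot_lt_le; intros Hl; apply (HM1 h); [split; lra| lra]).
        split; [apply Rdiv_le_0_compat; lra|]. apply div_le_iff; [lra|]. nra.
      * assert (h <> 0) by (intros ->; rewrite Rabs_R0 in Hh; lra).
        rewrite Rabs_left1 in Hh by lra.
        assert (F (x + h) <= F x) by (apply Hm; lra).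
        assert (F x - F (x - - h) <= M2 * - h) by (apply Rnot_lt_le; intros Hl; apply (HM2 (- h)); [split; lra| lra]).
        replace (x - - h) with (x + h) in * by ring.
        rewrite div_neg by auto.
        split; [apply Rdiv_le_0_compat; lra|]. apply div_le_iff; [lra|]. nra.
    + intros Hpb. apply H3. split; auto.
Qed.

Lemma nonov_le lo hi l : nonoverlapping lo hi l -> lo <= hi.
Proof.
  revert lo; induction l as [|[a b] l IH]; simpl; intros lo H; [auto|].
  destruct H as [H1 [H2 H3]]. apply IH in H3. lra.
Qed.

Lemma nonov_widen lo hi lo' hi' l : nonoverlapping lo hi l -> lo' <= lo -> hi <= hi' ->
  nonoverlapping lo' hi' l.
Proof.
  revert lo lo'; induction l as [|[a b] l IH]; simpl; intros lo lo' H H1 H2; [lra|].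
  destruct H as [H3 [H4 H5]]. split; [lra|]. split; auto. apply (IH b b); auto; lra.
Qed.

Lemma nonov_app lo m hi l1 l2 : nonoverlapping lo m l1 -> nonoverlapping m hi l2 ->
  nonoverlapping lo hi (l1 ++ l2).
Proof.
  revert lo; induction l1 as [|[a b] l IH]; simpl; intros lo H1 H2.
  - eapply nonov_widen; eauto; lra.
  - destruct H1 as [H3 [H4 H5]]. split; auto.
Qed.

Lemma tv_app u l1 l2 : total_variation_on u (l1 ++ l2) = total_variation_on u l1 + total_variation_on u l2.
Proof. induction l1 as [|[a b] l IH]; simpl; [lra| rewrite IH; lra]. Qed.

Lemma tl_bound lo hi l : nonoverlapping lo hi l -> total_length l <= hi - lo.
Proof.
  revert lo; induction l as [|[a b] l IH]; simpl; intros lo H; [lra|].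
  destruct H as [H1 [H2 H3]]. apply IH in H3. lra.
Qed.

Lemma tv_ge0 u l : 0 <= total_variation_on u l.
Proof. induction l as [|[a b] l IH]; simpl; [lra|]. pose proof (Rabs_pos (u b - u a)); lra. Qed.

Lemma nonov_split u lo m hi l : nonoverlapping lo hi l -> lo <= m <= hi ->
  exists l1 l2, nonoverlapping lo m l1 /\ nonoverlapping m hi l2 /\
    total_variation_on u l <= total_variation_on u l1 + total_variation_on u l2.
Proof.
  revert lo; induction l as [|[a b] l IH]; simpl; intros lo H Hm.
  - exists [], []; simpl; repeat split; lra.
  - destruct H as [H1 [H2 H3]].
    destruct (Rle_dec b m) as [Hbm|Hbm].
    + destruct (IH b H3 ltac:(split; [auto| lra])) as [l1 [l2 [K1 [K2 K3]]]].
      exists ((a, b) :: l1), l2. simpl. repeat split; auto. lra.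
    + destruct (Rle_dec m a) as [Hma|Hma].
      * exists [], ((a, b) :: l). simpl. repeat split; auto; try lra.
      * exists [(a, m)], ((m, b) :: l). simpl. repeat split; auto; try lra.
        replace (u b - u a) with ((u m - u a) + (u b - u m)) by ring.
        pose proof (Rabs_triang (u m - u a) (u b - u m)). lra.
Qed.

Lemma dpl_ext f g t l : (forall x, f x = g x) -> derivable_pt_lim f t l -> derivable_pt_lim g t l.
Proof.
  intros H Hf eps He. destruct (Hf eps He) as [d Hd]. exists d. intros h Hh Hhd.
  rewrite <- !H. apply Hd; auto.
Qed.

Section AC.
Variables (T : R) (u : R -> R).
Hypothesis HT : 0 < T.
Hypothesis Hu : W11 T u.

Lemma ac_bv : exists B, forall l, nonoverlapping 0 T l -> total_variation_on u l <= B.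
Proof.
  destruct (Hu 1 Rlt_0_1) as [d [Hd Hac]].
  destruct (archimed (T / d)) as [Ha _].
  assert (HTd : 0 < T / d) by (apply Rdiv_lt_0_compat; lra).
  assert (Hz : (0 <= up (T / d))%Z) by (apply le_IZR; lra).
  set (n := S (Z.to_nat (up (T / d)))).
  assert (Hn : T / d < INR n).
  { unfold n. rewrite S_INR, INR_IZR_INZ, Z2Nat.id by lia. lra. }
  assert (Hn0 : 0 < INR n) by (unfold n; apply lt_0_INR; lia).
  set (h := T / INR n).
  assert (Hh : 0 < h) by (apply Rdiv_lt_0_compat; lra).
  assert (Hhd : h < d).
  { unfold h. apply Rmult_lt_reg_r with (INR n); auto. replace (T / INR n * INR n) with T by (field; lra).
    apply Rmult_lt_compat_r with (r := d) in Hn; [|lra].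
    replace (T / d * d) with T in Hn by (field; lra). lra. }
  assert (HnT : INR n * h = T) by (unfold h; field; lra).
  assert (P : forall k, (k <= n)%nat -> forall l, nonoverlapping 0 (INR k * h) l ->
                total_variation_on u l <= INR k + 1).
  { induction k; intros Hk l Hl.
    - simpl in Hl. rewrite Rmult_0_l in Hl. simpl.
      assert (total_variation_on u l < 1); [|lra].
      apply Hac. eapply nonov_widen; eauto; lra.
      apply tl_bound in Hl. lra.
    - assert (HkT : INR k * h <= INR (S k) * h) by (rewrite S_INR; lra).
      assert (Hk0 : 0 <= INR k * h) by (apply Rmult_le_pos; [apply pos_INR| lra]).
      destruct (nonov_split u 0 (INR k * h) (INR (S k) * h) l Hl ltac:(lra)) as [l1 [l2 [K1 [K2 K3]]]].
      specialize (IHk ltac:(lia) l1 K1).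
      assert (total_variation_on u l2 < 1).
      { apply Hac.
        - apply (nonov_widen (INR k * h) (INR (S k) * h)); [exact K2| lra|]. rewrite <- HnT. apply Rmult_le_compat_r; [lra|].
          apply le_INR; auto.
        - apply tl_bound in K2. rewrite S_INR in K2. lra. }
      rewrite S_INR. lra. }
  exists (INR n + 1). intros l Hl. apply P; auto. rewrite HnT; auto.
Qed.

Definition Vset (x : R) := fun s => exists l, nonoverlapping 0 x l /\ s = total_variation_on u l.
Definition V (x : R) : R := supr (Vset x).

Lemma V_lub x : 0 <= x <= T -> is_lub (Vset x) (V x).
Proof.
  intros Hx. destruct ac_bv as [B HB]. apply supr_spec.
  - exists B. intros s [l [Hl ->]]. apply HB. eapply nonov_widen; eauto; lra.
  - exists 0. exists []. simpl; split; lra.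
Qed.

Lemma V_incr x y : 0 <= x -> x <= y -> y <= T -> V x + Rabs (u y - u x) <= V y.
Proof.
  intros H1 H2 H3.
  assert (V x <= V y - Rabs (u y - u x)); [|lra].
  apply (lub_least _ _ _ (V_lub x ltac:(lra))). intros s [l [Hl ->]].
  assert (total_variation_on u (l ++ [(x, y)]) <= V y).
  { apply (lub_ge _ _ _ (V_lub y ltac:(lra))). exists (l ++ [(x, y)]). split; auto.
    eapply nonov_app; eauto. simpl. lra. }
  rewrite tv_app in H. simpl in H. lra.
Qed.

Lemma u_cont eps : 0 < eps -> exists d, 0 < d /\ forall s t, 0 <= s <= T -> 0 <= t <= T -> Rabs (s - t) < d ->
  Rabs (u s - u t) < eps.
Proof.
  intros He. destruct (Hu eps He) as [d [Hd Hac]]. exists d; split; auto.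
  intros s t Hs Ht Hst. destruct (Rle_dec t s).
  - specialize (Hac [(t, s)]). simpl in Hac. rewrite Rabs_pos_eq in Hst by lra.
    assert (Rabs (u s - u t) + 0 < eps) by (apply Hac; repeat split; lra). lra.
  - specialize (Hac [(s, t)]). simpl in Hac. rewrite Rabs_left in Hst by lra.
    rewrite Rabs_minus_sym.
    assert (Rabs (u t - u s) + 0 < eps) by (apply Hac; repeat split; lra). lra.
Qed.

Lemma V_cont eps : 0 < eps -> exists d, 0 < d /\ forall x y, 0 <= x -> x <= y -> y <= T -> y - x < d ->
  V y <= V x + eps.
Proof.
  intros He. destruct (Hu eps He) as [d [Hd Hac]]. exists d; split; auto.
  intros x y H1 H2 H3 H4.
  apply (lub_least _ _ _ (V_lub y ltac:(lra))). intros s [l [Hl ->]].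
  destruct (nonov_split u 0 x y l Hl ltac:(lra)) as [l1 [l2 [K1 [K2 K3]]]].
  assert (total_variation_on u l1 <= V x) by (apply (lub_ge _ _ _ (V_lub x ltac:(lra))); exists l1; auto).
  assert (total_variation_on u l2 < eps).
  { apply Hac. eapply nonov_widen; eauto; lra. apply tl_bound in K2; lra. }
  lra.
Qed.

Lemma V_mono : mono V 0 T.
Proof. intros x y H1 H2 H3. pose proof (V_incr x y H1 H2 H3). pose proof (Rabs_pos (u y - u x)). lra. Qed.

Lemma W_mono : mono (fun t => V t - u t) 0 T.
Proof.
  intros x y H1 H2 H3. pose proof (V_incr x y H1 H2 H3).
  pose proof (Rle_abs (u y - u x)). lra.
Qed.

Lemma V_contab : contab V 0 T.
Proof.
  intros t Ht eps He. destruct (V_cont (eps / 2)) as [d [Hd Hc]]; [lra|].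
  exists d; split; auto. intros s Hs Hst.
  destruct (Rle_dec t s).
  - rewrite Rabs_pos_eq in Hst by lra. specialize (Hc t s ltac:(lra) ltac:(lra) ltac:(lra) ltac:(lra)).
    pose proof (V_mono t s ltac:(lra) ltac:(lra) ltac:(lra)). apply Rabs_def1; lra.
  - rewrite Rabs_left in Hst by lra. specialize (Hc s t ltac:(lra) ltac:(lra) ltac:(lra) ltac:(lra)).
    pose proof (V_mono s t ltac:(lra) ltac:(lra) ltac:(lra)). apply Rabs_def1; lra.
Qed.

Lemma W_contab : contab (fun t => V t - u t) 0 T.
Proof.
  intros t Ht eps He. destruct (V_contab t Ht (eps / 2)) as [d1 [Hd1 H1]]; [lra|].
  destruct (u_cont (eps / 2)) as [d2 [Hd2 H2]]; [lra|].
  exists (Rmin d1 d2); split; [apply Rmin_glb_lt; auto|]. intros s Hs Hst.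
  pose proof (Rmin_l d1 d2). pose proof (Rmin_r d1 d2).
  specialize (H1 s Hs ltac:(lra)). specialize (H2 s t Hs Ht ltac:(lra)).
  replace (V s - u s - (V t - u t)) with ((V s - V t) - (u s - u t)) by ring.
  eapply Rle_lt_trans; [apply Rabs_triang|]. rewrite Rabs_Ropp. lra.
Qed.

Lemma ac_diff_ae : ae_on T (fun t => exists l, derivable_pt_lim u t l).
Proof.
  destruct (mono_diff_ae V 0 T HT V_mono V_contab) as [N1 [HN1 H1]].
  destruct (mono_diff_ae (fun t => V t - u t) 0 T HT W_mono W_contab) as [N2 [HN2 H2]].
  exists (fun x => N1 x \/ N2 x). split; [apply null_union2; auto|].
  intros t Ht Hn. destruct (H1 t Ht (fun h => Hn (or_introl h))) as [l1 Hl1].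
  destruct (H2 t Ht (fun h => Hn (or_intror h))) as [l2 Hl2].
  exists (l1 - l2).
  apply dpl_ext with (fun s => V s - (V s - u s)); [intros; ring|].
  apply (derivable_pt_lim_minus V (fun s => V s - u s)); auto.
Qed.

Lemma ac_bounded : exists B, forall t, 0 <= t <= T -> Rabs (u t) <= B.
Proof.
  destruct ac_bv as [B HB]. exists (Rabs (u 0) + B). intros t Ht.
  specialize (HB [(0, t)]). simpl in HB.
  assert (Rabs (u t - u 0) + 0 <= B) by (apply HB; repeat split; lra).
  replace (u t) with ((u t - u 0) + u 0) by ring.
  pose proof (Rabs_triang (u t - u 0) (u 0)). lra.
Qed.

End AC.

Lemma Rabs_def2b x y : Rabs x <= y -> - y <= x <= y.
Proof. intros H. unfold Rabs in H. destruct (Rcase_abs x); lra. Qed.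

Lemma tv_comb T w u v A B : 0 <= A -> 0 <= B ->
  (forall s t, 0 <= s <= T -> 0 <= t <= T -> Rabs (w s - w t) <= A * Rabs (u s - u t) + B * Rabs (v s - v t)) ->
  forall l lo, 0 <= lo -> nonoverlapping lo T l ->
  total_variation_on w l <= A * total_variation_on u l + B * total_variation_on v l.
Proof.
  intros HA HB H l. induction l as [|[a b] l IH]; simpl; intros lo Hlo Hl; [lra|].
  destruct Hl as [H1 [H2 H3]]. pose proof (nonov_le _ _ _ H3).
  specialize (IH b ltac:(lra) H3). specialize (H b a ltac:(lra) ltac:(lra)). lra.
Qed.

Lemma W11_comb T w u v A B : 0 <= A -> 0 <= B -> W11 T u -> W11 T v ->
  (forall s t, 0 <= s <= T -> 0 <= t <= T -> Rabs (w s - w t) <= A * Rabs (u s - u t) + B * Rabs (v s - v t)) ->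
  W11 T w.
Proof.
  intros HA HB Hu Hv H eps He.
  destruct (Hu (eps / 2 / (A + 1))) as [d1 [Hd1 H1]]. apply Rdiv_lt_0_compat; lra.
  destruct (Hv (eps / 2 / (B + 1))) as [d2 [Hd2 H2]]. apply Rdiv_lt_0_compat; lra.
  exists (Rmin d1 d2). split; [apply Rmin_glb_lt; auto|]. intros l Hl Htl.
  pose proof (Rmin_l d1 d2). pose proof (Rmin_r d1 d2).
  specialize (H1 l Hl ltac:(lra)). specialize (H2 l Hl ltac:(lra)).
  pose proof (tv_comb T w u v A B HA HB H l 0 (Rle_refl 0) Hl).
  assert (A * total_variation_on u l <= A * (eps / 2 / (A + 1))) by (apply Rmult_le_compat_l; lra).
  assert (B * total_variation_on v l <= B * (eps / 2 / (B + 1))) by (apply Rmult_le_compat_l; lra).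
  assert (A * (eps / 2 / (A + 1)) < eps / 2).
  { apply Rmult_lt_reg_r with (A + 1); [lra|]. replace (A * (eps / 2 / (A + 1)) * (A + 1)) with (A * (eps / 2)) by (field; lra). nra. }
  assert (B * (eps / 2 / (B + 1)) < eps / 2).
  { apply Rmult_lt_reg_r with (B + 1); [lra|]. replace (B * (eps / 2 / (B + 1)) * (B + 1)) with (B * (eps / 2)) by (field; lra). nra. }
  lra.
Qed.

Lemma W11_quot T (f f' : R -> R) (eps E : R -> R) : 0 < T ->
  (forall x, derivable_pt_lim f x (f' x)) -> (forall x, 0 < f x) ->
  (forall M, exists K, forall x, Rabs x <= M -> Rabs (f' x) <= K) ->
  W11 T eps -> W11 T E -> W11 T (fun s => E s / f (eps s)).
Proof.
  intros HT Hf Hfp Hbnd He HE.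
  destruct (ac_bounded T eps HT He) as [Be HBe].
  destruct (ac_bounded T E HT HE) as [BE HBE].
  assert (HBe0 : 0 <= Be) by (specialize (HBe 0 ltac:(lra)); pose proof (Rabs_pos (eps 0)); lra).
  assert (HBE0 : 0 <= BE) by (specialize (HBE 0 ltac:(lra)); pose proof (Rabs_pos (E 0)); lra).
  destruct (continuity_ab_min f (- Be) Be ltac:(lra)) as [xm [Hxm _]].
  { intros c _. apply derivable_continuous_pt. exists (f' c). apply Hf. }
  set (m := f xm). assert (Hm : 0 < m) by apply Hfp.
  destruct (Hbnd Be) as [K HK].
  assert (HK0 : 0 <= K) by (specialize (HK 0 ltac:(rewrite Rabs_R0; lra)); pose proof (Rabs_pos (f' 0)); lra).
  assert (Hlip : forall y z, Rabs y <= Be -> Rabs z <= Be -> Rabs (f y - f z) <= K * Rabs (y - z)).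
  { intros y z Hy Hz. destruct (MVT_abs f f' z y) as [c [Hc1 Hc2]]. intros; apply Hf.
    rewrite Hc1. apply Rmult_le_compat_r; [apply Rabs_pos|]. apply HK.
    apply Rabs_def2b in Hy. apply Rabs_def2b in Hz.
    unfold Rmin, Rmax in Hc2. apply Rabs_le. destruct (Rle_dec z y); lra. }
  apply (W11_comb T _ E eps (/ m) (BE * K / (m * m))); auto.
  { left; apply Rinv_0_lt_compat; auto. }
  { apply Rdiv_le_0_compat; [apply Rmult_le_pos; auto| apply Rmult_lt_0_compat; auto]. }
  intros s t Hs Ht.
  assert (Hes : Rabs (eps s) <= Be) by auto. assert (Het : Rabs (eps t) <= Be) by auto.
  assert (Hfs : m <= f (eps s)) by (apply Hxm; apply Rabs_def2b in Hes; lra).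
  assert (Hft : m <= f (eps t)) by (apply Hxm; apply Rabs_def2b in Het; lra).
  set (fs := f (eps s)) in *. set (ft := f (eps t)) in *.
  assert (Hfs0 : 0 < fs) by lra. assert (Hft0 : 0 < ft) by lra.
  replace (E s / fs - E t / ft) with ((E s - E t) * / fs + E t * (ft - fs) * / (fs * ft)) by (field; lra).
  eapply Rle_trans; [apply Rabs_triang|]. rewrite !Rabs_mult, !Rabs_inv.
  rewrite (Rabs_pos_eq fs) by lra. rewrite (Rabs_pos_eq (fs * ft)) by nra.
  apply Rplus_le_compat.
  - rewrite Rmult_comm. apply Rmult_le_compat_r; [apply Rabs_pos|]. apply Rinv_le_contravar; auto.
  - assert (Hl : Rabs (ft - fs) <= K * Rabs (eps s - eps t)).
    { rewrite Rabs_minus_sym. apply Hlip; auto. }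
    assert (Hinv : / (fs * ft) <= / (m * m)) by (apply Rinv_le_contravar; nra).
    assert (Hi0 : 0 <= / (fs * ft)) by (left; apply Rinv_0_lt_compat; nra).
    unfold Rdiv.
    replace (BE * K * / (m * m) * Rabs (eps s - eps t)) with (BE * (K * Rabs (eps s - eps t)) * / (m * m)) by ring.
    apply Rmult_le_compat; [apply Rmult_le_pos; apply Rabs_pos| auto| |auto].
    apply Rmult_le_compat; try apply Rabs_pos; auto.
Qed.

Lemma dpl_val f t l l' : derivable_pt_lim f t l -> l = l' -> derivable_pt_lim f t l'.
Proof. intros H ->; auto. Qed.

Lemma dpl_sq g t l : derivable_pt_lim g t l -> derivable_pt_lim (fun s => g s ^ 2) t (2 * g t * l).
Proof.
  intros H. apply dpl_ext with (fun s => g s * g s); [intros; ring|].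
  eapply dpl_val; [apply (derivable_pt_lim_mult g g); eauto| ring].
Qed.

Theorem mainTheorem7
  (T : R) (HT : 0 < T)
  (* Preisach kernel g, its v-derivative dg, potential kernel G *)
  (g dg G : R -> R -> R) (mu mu1 : R -> R)
  (Hdg : forall r v, 0 < r -> derivable_pt_lim (g r) v (dg r v))
  (Hg0 : forall r, 0 < r -> g r 0 = 0)
  (Hdg_bnd : forall r v, 0 < r -> 0 <= dg r v <= mu r)
  (Hdg_bnd1 : forall r v, 0 < r -> Rabs v * dg r v <= mu1 r)
  (Hmu : L1_0_inf mu) (Hmu1 : L1_0_inf mu1)
  (HG : forall r v, 0 < r -> HK_oriented (fun w => w * dg r w) 0 v (G r v))
  (* the resulting dissipation inequality q dP[q]/dt - dU[q]/dt >= 0 a.e. *)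
  (Hdiss : forall q, W11 T q -> forall Pq Uq : R -> R,
      (forall t, 0 <= t <= T -> preisach_at g T q t (Pq t) /\ preisach_at G T q t (Uq t)) ->
      ae_on T (fun t => exists dP dU, derivable_pt_lim Pq t dP /\
                 derivable_pt_lim Uq t dU /\ q t * dP - dU >= 0))
  (* constants and the function f *)
  (c kappa e : R) (Hc : 0 < c) (Hkappa : 0 < kappa)
  (f f' : R -> R)
  (Hf' : forall x, derivable_pt_lim f x (f' x)) (Hf'c : continuity f')
  (Hfpos : forall x, 0 < f x)
  (Hf'bnd : forall M, exists K, forall x, Rabs x <= M -> Rabs (f' x) <= K)
  (* the data *)
  (eps E : R -> R) (Heps : W11 T eps) (HE : W11 T E)
  (Pq Uq : R -> R)
  (HPU : forall t, 0 <= t <= T ->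
      preisach_at g T (fun s => E s / f (eps s)) t (Pq t) /\
      preisach_at G T (fun s => E s / f (eps s)) t (Uq t)) :
  let sigma := fun t => c * eps t - e * E t + f' (eps t) * Uq t in
  let D := fun t => e * eps t + kappa * E t + Pq t in
  let F := fun t => c / 2 * (eps t)^2 + kappa / 2 * (E t)^2 + f (eps t) * Uq t in
  ae_on T (fun t => exists de dD dF,
      derivable_pt_lim eps t de /\ derivable_pt_lim D t dD /\
      derivable_pt_lim F t dF /\
      de * sigma t + dD * E t - dF >= 0).
Proof.
Proof.
  intros sigma D F0.
  assert (Hq : W11 T (fun s => E s / f (eps s))) by (apply W11_quot with f'; auto).
  pose proof (Hdiss _ Hq Pq Uq HPU) as Hd.
  pose proof (ac_diff_ae T eps HT Heps) as He.
  pose proof (ac_diff_ae T E HT HE) as HEd.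
  pose proof (ae_and _ _ _ Hd (ae_and _ _ _ He HEd)) as Hall.
  refine (ae_mono T _ _ _ Hall).
  intros t Ht [[dP [dU [HP [HU Hineq]]]] [[de Hde] [dE HdE]]].
  exists de, (e * de + kappa * dE + dP),
    (c / 2 * (2 * eps t * de) + kappa / 2 * (2 * E t * dE) + (f' (eps t) * de * Uq t + f (eps t) * dU)).
  split; [auto|]. split; [|split].
  - unfold D. apply (derivable_pt_lim_plus (fun s => e * eps s + kappa * E s) Pq); auto.
    apply (derivable_pt_lim_plus (fun s => e * eps s) (fun s => kappa * E s)).
    + apply (derivable_pt_lim_scal eps e); auto.
    + apply (derivable_pt_lim_scal E kappa); auto.
  - unfold F0.
    apply (derivable_pt_lim_plus (fun s => c / 2 * eps s ^ 2 + kappa / 2 * E s ^ 2) (fun s => f (eps s) * Uq s)).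
    + apply (derivable_pt_lim_plus (fun s => c / 2 * eps s ^ 2) (fun s => kappa / 2 * E s ^ 2)).
      * apply (derivable_pt_lim_scal (fun s => eps s ^ 2) (c / 2)). apply dpl_sq; auto.
      * apply (derivable_pt_lim_scal (fun s => E s ^ 2) (kappa / 2)). apply dpl_sq; auto.
    + apply (derivable_pt_lim_mult (fun s => f (eps s)) Uq); auto.
      apply (derivable_pt_lim_comp eps f); auto.
  - unfold sigma. cbv beta in Hineq.
    assert (Hf0 : 0 < f (eps t)) by auto.
    replace (de * (c * eps t - e * E t + f' (eps t) * Uq t) + (e * de + kappa * dE + dP) * E t -
      (c / 2 * (2 * eps t * de) + kappa / 2 * (2 * E t * dE) + (f' (eps t) * de * Uq t + f (eps t) * dU)))
      with (f (eps t) * (E t / f (eps t) * dP - dU)) by (field; lra).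
    apply Rle_ge. apply Rmult_le_pos; lra.
Qed.
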